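(* Let $\nu\ge3$ be a square-free integer with $\nu\equiv2$ or $3\pmod 4$, and for $n\ge0$ let $P_n(t)=(t^2-\nu)^{\circ n}\in\mathbb{Z}[t]$ (so $P_0(t)=t$), with constant term $C_n$. Let $p$ be an odd prime not dividing $\nu$ such that $p$ divides $C_n$ for some $n\ge1$, and let $n(p)$ be the least positive integer $n$ with $p\mid C_n$. Then for any non-negative integers $k,\ell$ which are distinct modulo $n(p)$, the reductions $\bar P_k$ and $\bar P_\ell$ modulo $p$ are coprime in $\mathbb{F}_p[t]$. *)

(* Defs.v *)
From HB Require Import structures.
From mathcomp Require Import all_boot all_order all_algebra.
Set Implicit Arguments. Unset Strict Implicit. Unset Printing Implicit Defensive.
Import Order.TTheory GRing.Theory Num.Theory.
Local Open Scope ring_scope.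

Definition squarefree (n : nat) : Prop :=
  forall d : nat, (d * d %| n)%N -> d = 1%N.

Definition Pit (nu : nat) (n : nat) : {poly int} :=
  iter n (fun q : {poly int} => ('X^2 - (nu%:R)%:P) \Po q) 'X.

Definition Cterm (nu : nat) (n : nat) : int := (Pit nu n)`_0.

Definition redp (p : nat) (q : {poly int}) : {poly 'F_p} :=
  map_poly (fun z : int => z%:~R) q.

(* Main.v *)
Require Import Defs.
From HB Require Import structures.
From mathcomp Require Import all_boot all_order all_algebra.
Import Order.TTheory GRing.Theory Num.Theory.
Local Open Scope ring_scope.

Lemma Pit_add nu a b : Pit nu (a + b) = Pit nu a \Po Pit nu b.
Proof.
elim: a => [|a IH]; first by rewrite add0n /Pit /= comp_polyX.
by rewrite addSn /Pit /= -/(Pit nu (a + b)) IH comp_polyA.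
Qed.

Lemma Cterm_S nu n : Cterm nu n.+1 = Cterm nu n ^+ 2 - nu%:R.
Proof.
rewrite /Cterm /Pit /= -/(Pit nu n).
by rewrite comp_polyB comp_polyC comp_Xn_poly coefB coefC /= expr2 coef0M expr2.
Qed.

Lemma comp_decomp (R : nzRingType) (Q P : {poly R}) :
  exists S, Q \Po P = S * P + (Q`_0)%:P.
Proof.
elim/poly_ind: Q => [|q c _].
  by exists 0; rewrite comp_poly0 coef0 mul0r add0r.
exists (q \Po P); rewrite comp_poly_MXaddC coefD coefMX coefC /= add0r.
by [].
Qed.

Theorem lemma4p6 (nu p np : nat)
  (Hnu3 : (3 <= nu)%N) (Hsf : squarefree nu)
  (Hmod : (nu %% 4 == 2)%N || (nu %% 4 == 3)%N)
  (Hp : prime p) (Hodd : odd p) (Hpnu : ~~ (p %| nu)%N)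
  (Hnp_pos : (0 < np)%N)
  (Hnp_div : (p%:Z %| Cterm nu np)%Z)
  (Hnp_min : forall m : nat, (0 < m)%N -> (m < np)%N -> ~~ (p%:Z %| Cterm nu m)%Z) :
  forall k l : nat, (k %% np != l %% np)%N ->
    coprimep (redp p (Pit nu k)) (redp p (Pit nu l)).
Proof.
pose c m : 'F_p := (Cterm nu m)%:~R.
have hch := pchar_Fp Hp.
have cE m : (c m == 0) = (p%:Z %| Cterm nu m)%Z by rewrite (dvdz_pcharf hch).
have cS m : c m.+1 = c m ^+ 2 - nu%:R.
  by rewrite /c Cterm_S rmorphB rmorphXn /= rmorph_nat.
have c0 : c 0%N = 0 by rewrite /c /Cterm /Pit /= coefX.
have cnp : c np = 0 by apply/eqP; rewrite cE.
have cper m : c (m + np)%N = c m.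
  by elim: m => [|m IH]; rewrite ?add0n ?cnp ?c0 // addSn !cS IH.
have cperq q m : c (m + q * np)%N = c m.
  by elim: q => [|q IH]; rewrite ?mul0n ?addn0 // mulSn addnCA addnC cper IH.
have key m : c m = 0 -> (np %| m)%N.
  move=> hm.
  have hr : c (m %% np)%N = 0 by rewrite -(cperq (m %/ np)%N) addnC -divn_eq.
  rewrite /dvdn; apply/eqP.
  case: (posnP (m %% np)%N) => [->|pos]; first by [].
  have := Hnp_min _ pos (ltn_pmod m Hnp_pos); by rewrite -cE hr eqxx.
have main k d : (0 < d)%N -> ~~ (np %| d)%N ->
    coprimep (redp p (Pit nu k)) (redp p (Pit nu (d + k))).
  move=> dpos ndiv.
  rewrite Pit_add /redp map_comp_poly.
  have [S ->] := comp_decomp _ (map_poly (fun z : int => z%:~R : 'F_p) (Pit nu d))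
                 (map_poly (fun z : int => z%:~R : 'F_p) (Pit nu k)).
  rewrite coprimep_addl_mul coef_map /= -/(Cterm nu d) -/(c d).
  have nz : c d != 0 by apply/eqP => /key; apply/negP.
  by rewrite -[_%:P]mulr1 mul_polyC coprimepZr // coprimep1.
move=> k l hkl.
case: (ltngtP k l) => hlt.
- have -> : l = ((l - k) + k)%N by rewrite subnK // ltnW.
  apply: main; first by rewrite subn_gt0.
  apply: contra hkl => hd; apply/eqP.
  by rewrite -[in RHS](subnK (ltnW hlt)) -modnDml (eqP hd) add0n.
- rewrite coprimep_sym.
  have -> : k = ((k - l) + l)%N by rewrite subnK // ltnW.
  apply: main; first by rewrite subn_gt0.
  apply: contra hkl => hd; apply/eqP.
  by rewrite -[in LHS](subnK (ltnW hlt)) -modnDml (eqP hd) add0n.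
- by rewrite hlt eqxx in hkl.
Qed.
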